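(* Let $\mathcal{G}$ be a class of graphs closed under taking subgraphs. The following are equivalent: (i) there exists $d\in\mathbb{N}$ such that every graph $G\in\mathcal{G}$ is strongly $d$-degenerate; (ii) there exist $s\in\mathbb{N}$ and $k\in\mathbb{N}$ such that $K_{2,s}\notin\mathcal{G}$ and such that for every graph $H$ of minimum degree at least $k$, the $1$-subdivision of $H$ is not contained in $\mathcal{G}$.
   Context: All graphs are finite and simple. For an integer $d\ge1$, a vertex $v$ of a graph $G$ is $d$-removable in $G$ if $d_G(v)\le d$ and at most one neighbour $w$ of $v$ has $d_G(w)>d$. A graph $G$ is strongly $d$-degenerate if every non-empty subgraph $G'$ of $G$ contains a vertex which is $d$-removable in $G'$. The $1$-subdivision of $H$ is the graph obtained by replacing every edge of $H$ by a path of length $2$ through a new vertex. Membership in $\mathcal{G}$ is understood up to isomorphism. *)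

(* Defs.v *)
From mathcomp Require Import all_boot.
Set Implicit Arguments. Unset Strict Implicit. Unset Printing Implicit Defensive.

Record sgraph := SGraph {
  vert : finType;
  adj : rel vert;
  adj_sym : symmetric adj;
  adj_irr : irreflexive adj }.

Definition degE (V : finType) (E : rel V) (v : V) : nat := #|[set w | E v w]|.

Definition deg (G : sgraph) (v : vert G) : nat := degE (@adj G) v.

Definition subgraph_of (H G : sgraph) : Prop :=
  exists f : vert H -> vert G,
    injective f /\ forall x y, adj x y -> adj (f x) (f y).

Definition subgraph_closed (C : sgraph -> Prop) : Prop :=
  forall G H : sgraph, C G -> subgraph_of H G -> C H.

Definition removable (V : finType) (S : {set V}) (E : rel V) (d : nat) (v : V) : bool :=
  [&& v \in S, degE E v <= d & #|[set w | E v w && (d < degE E w)]| <= 1].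

Definition strongly_degenerate (d : nat) (G : sgraph) : Prop :=
  forall (S : {set vert G}) (E : rel (vert G)),
    (forall x y, E x y -> [&& x \in S, y \in S & adj x y]) ->
    symmetric E ->
    S != set0 ->
    exists v, removable S E d v.

Definition bip_adj (m n : nat) : rel ('I_m + 'I_n)%type :=
  fun x y => match x, y with
             | inl _, inr _ | inr _, inl _ => true
             | _, _ => false end.

Lemma bip_adj_sym m n : symmetric (@bip_adj m n).
Proof. by case=> x; case. Qed.

Lemma bip_adj_irr m n : irreflexive (@bip_adj m n).
Proof. by case. Qed.

Definition K (m n : nat) : sgraph := SGraph (@bip_adj_sym m n) (@bip_adj_irr m n).

Definition edge_pred (H : sgraph) : pred {set vert H} :=
  fun e => [exists x, exists y, adj x y && (e == [set x; y])].

Definition edge_t (H : sgraph) := {e : {set vert H} | edge_pred e}.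

Definition sub_adj (H : sgraph) : rel (vert H + edge_t H)%type :=
  fun x y => match x, y with
             | inl v, inr e | inr e, inl v => v \in val e
             | _, _ => false end.

Lemma sub_adj_sym H : symmetric (@sub_adj H).
Proof. by case=> x; case. Qed.

Lemma sub_adj_irr H : irreflexive (@sub_adj H).
Proof. by case. Qed.

Definition subdivision (H : sgraph) : sgraph :=
  SGraph (@sub_adj_sym H) (@sub_adj_irr H).

(* minimum degree at least k (for a graph with at least one vertex) *)
Definition mindeg_ge (H : sgraph) (k : nat) : Prop :=
  forall v : vert H, k <= deg v.

(* Main.v *)
Require Import Defs.
From mathcomp Require Import all_boot.
From mathcomp Require Import zify.
From Stdlib Require Import Lia.

Module Aux.
Set Implicit Arguments. Unset Strict Implicit. Unset Printing Implicit Defensive.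

Definition dY (V : finType) (E : rel V) (Y : {set V}) (v : V) := #|[set w in Y | E v w]|.

Lemma sum_b2n (V : finType) (A : {pred V}) (P : pred V) :
  \sum_(a in A) (P a : nat) = #|[set a in A | P a]|.
Proof.
rewrite -sum1_card big_mkcond [RHS]big_mkcond /=; apply: eq_bigr => i _.
by rewrite !inE; case: (i \in A); case: (P i).
Qed.

Lemma dY_D1 (V : finType) (E : rel V) (X : {set V}) x a :
  x \in X -> dY E X a = dY E (X :\ x) a + E a x.
Proof.
move=> xX; rewrite /dY (cardsD1 x) addnC; congr (_ + _).
  by apply: eq_card => w; rewrite !inE andbA.
by rewrite inE xX.
Qed.

Lemma densest (V : finType) (E : rel V) : symmetric E -> irreflexive E ->
  forall k (X : {set V}), k.*2 * #|X| < \sum_(a in X) dY E X a ->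
  exists2 Y : {set V}, Y \subset X & (Y != set0) /\ (forall y, y \in Y -> k < dY E Y y).
Proof.
move=> Esym Eirr k X; move Hn: #|X| => n; elim: n X Hn => [|n IH] X Hn Hsum.
  move/eqP: Hn; rewrite cards_eq0 => /eqP HX; move: Hsum; by rewrite HX big_set0.
case: (boolP [exists x in X, dY E X x <= k]) => [/existsP [x /andP [xX dx]] | Hall].
  have HX' : #|X :\ x| = n by move: Hn; rewrite (cardsD1 x) xX add1n => -[].
  have Hs : \sum_(a in X) dY E X a = (dY E X x).*2 + \sum_(a in X :\ x) dY E (X :\ x) a.
    rewrite (big_setD1 x xX) /= -addnn -addnA; congr (_ + _).
    rewrite (eq_bigr (fun a => dY E (X :\ x) a + E a x)); last by move=> a _; exact: dY_D1.
    rewrite big_split /= addnC; congr (_ + _).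
    rewrite sum_b2n /dY; apply: eq_card => w; rewrite !inE Esym.
    by case: (w =P x) => [->|]; rewrite ?Eirr ?andbF.
  have Hs2 : k.*2 * n < \sum_(a in X :\ x) dY E (X :\ x) a.
    move: Hsum; rewrite Hs -!muln2; nia.
  have [Y YX [Y0 HY]] := IH _ HX' Hs2.
  by exists Y => //; apply: (subset_trans YX); apply: subsetDl.
exists X => //; split.
  apply/set0Pn; case: (set_0Vmem X) => [HX|[x xX]]; last by exists x.
  by move: Hsum; rewrite HX big_set0.
move=> y yX; rewrite ltnNge; apply/negP => H; move/negP: Hall; apply; apply/existsP; exists y.
by rewrite yX H.
Qed.

Lemma minn_step c (b : bool) : minn (c + b) 2 = minn c 2 + (b && (c < 2)).
Proof. by case: b; case: c => [|[|c]]. Qed.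

Lemma dY0 (V : finType) (E : rel V) q : dY E set0 q = 0.
Proof. by apply/eqP; rewrite cards_eq0; apply/eqP/setP => w; rewrite !inE. Qed.

Lemma greedy (V : finType) (E : rel V) (Esym : symmetric E) (Y : {set V}) d N :
  Y != set0 -> 8 * N + 10 <= d -> (forall y, y \in Y -> d <= dY E Y y) ->
  exists X M : {set V}, [/\ X \subset Y, X != set0, (forall m, m \in M -> m \notin X),
     (forall m, m \in M -> 2 <= dY E X m) & N * #|X| <= #|M| ].
Proof.
move=> Y0 Hd HY.
pose Psi (X : {set V}) := \sum_(q in Y) minn (dY E X q) 2.
pose Phi (X : {set V}) := (Psi X).*2 + (d - 2) * (#|Y| - #|X|).
case: (@arg_maxnP _ set0 (fun X : {set V} => X \subset Y) Phi (sub0set Y)) => X XY Hmax.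
pose M := [set q in Y :\: X | 2 <= dY E X q].
case: (boolP ((X != set0) && (N * #|X| <= #|M|))) => [/andP [X0 HM]|Hnot].
  exists X, M; split => // m; rewrite !inE; [by case/andP => /andP [] | by case/andP].
exfalso.
have cY : #|X| <= #|Y| by apply: subset_leq_card.
have F1 : Psi X <= 2 * #|Y|.
  apply: (@leq_trans (\sum_(q in Y) 2)); last by rewrite sum_nat_const mulnC.
  by apply: leq_sum => q _; apply: geq_minr.
have Psi0 : Psi set0 = 0.
  by rewrite /Psi big1 // => q _; rewrite dY0.
have F2 : (d - 2) * #|X| <= (Psi X).*2.
  have := Hmax set0 (sub0set Y); rewrite /Phi Psi0 cards0 subn0; nia.
have F3 : #|M| <= N * #|X|.
  move: Hnot; case: (set_0Vmem X) => [HX0|[x xX]].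
    rewrite HX0 cards0 muln0 leqn0 cards_eq0 => _; apply/eqP/setP => q.
    by rewrite /M !inE HX0 dY0 andbF.
  have -> : X != set0 by apply/set0Pn; exists x.
  by rewrite /= -ltnNge => /ltnW.
pose U := [set q in Y | dY E X q < 2].
have F4 : #|Y| <= #|U| + #|M| + #|X|.
  have UY : U \subset Y by apply/subsetP => q; rewrite inE => /andP [].
  rewrite -(cardsID U Y) (setIidPr UY) -addnA leq_add2l.
  have -> : Y :\: U = [set q in Y | 2 <= dY E X q].
    apply/setP => q; rewrite !inE ltnNge. by case: (q \in Y); case: (1 < dY E X q).
  apply: (leq_trans _ (leq_card_setU _ _)); apply: subset_leq_card; apply/subsetP => q.
  rewrite !inE; case: (q \in X); rewrite ?orbT //= orbF => /andP [-> ->].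
  by rewrite andbT.
have F5 : #|Y| <= 2 * #|U|.
  have : 8 * (N + 1) * #|X| <= (d - 2) * #|X| by apply: leq_mul => //; lia.
  move: F1 F2 F3 F4; rewrite -!muln2; nia.
pose g x := #|[set q in Y | E x q && (dY E X q < 2)]|.
have F6 : forall x, x \in Y :\: X -> Psi (x |: X) = Psi X + g x.
  move=> x; rewrite inE => /andP [xX xY]; rewrite /Psi.
  under eq_bigr => q _ do rewrite (@dY_D1 _ E (x |: X) x q (setU11 x X)) setU1K // minn_step.
  rewrite big_split /=; congr (_ + _); rewrite sum_b2n; apply: eq_card => q.
  by rewrite !inE Esym.
have F7 : (d - 1) * #|U| <= \sum_(x in Y :\: X) g x.
  have -> : \sum_(x in Y :\: X) g x =
     \sum_(x in Y :\: X) \sum_(q in Y) ((E x q && (dY E X q < 2)) : nat).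
    by apply: eq_bigr => x _; rewrite sum_b2n.
  rewrite exchange_big /=.
  have -> : \sum_(q in Y) \sum_(x in Y :\: X) ((E x q && (dY E X q < 2)) : nat) =
      \sum_(q in U) #|[set x in Y :\: X | E x q]|.
    rewrite [RHS](eq_bigl (fun q => (q \in Y) && (dY E X q < 2))); last by move=> q; rewrite /U !inE.
    rewrite [RHS]big_mkcondr /=; apply: eq_bigr => q qY.
    rewrite sum_b2n; case: (dY E X q < 2) => /=.
      by apply: eq_card => x; rewrite !inE andbT.
    by apply/eqP; rewrite cards_eq0; apply/eqP/setP => x; rewrite !inE !andbF.
  rewrite mulnC -sum_nat_const; apply: leq_sum => q; rewrite inE => /andP [qY qU].
  have := HY q qY; rewrite /dY => H1.
  have : #|[set w in Y | E q w]| <= #|[set x in Y :\: X | E x q]| + #|[set w in X | E q w]|.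
    apply: (leq_trans _ (leq_card_setU _ _)); apply: subset_leq_card; apply/subsetP => w.
    rewrite !inE Esym; case: (w \in X) => /=; [by case/andP | by rewrite orbF].
  move: qU; rewrite /dY; lia.
have [x xYX Hx] : exists2 x, x \in Y :\: X & d - 2 < (g x).*2.
  case: (boolP [exists x in Y :\: X, d - 2 < (g x).*2]) => [/exists_inP [x H1 H2]|/exists_inPn Hall]; first by exists x.
  exfalso.
  have : (\sum_(x in Y :\: X) g x).*2 <= (d - 2) * #|Y|.
    rewrite -mul2n big_distrr /=.
    apply: (@leq_trans (\sum_(x in Y :\: X) (d - 2))).
      by apply: leq_sum => x /Hall; rewrite -leqNgt mul2n.
    rewrite sum_nat_const mulnC leq_mul2l; apply/orP; right.
    by apply: subset_leq_card; apply: subsetDl.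
  have Ypos : 0 < #|Y| by rewrite card_gt0.
  move: F7 F5 Hd Ypos; rewrite -!muln2; nia.
have xYX' := xYX; move: xYX'; rewrite inE => /andP [xX xY].
have XxY : x |: X \subset Y.
  by apply/subsetP => w; rewrite !inE => /orP [/eqP ->|] //; move/(subsetP XY).
have := Hmax (x |: X) XxY.
rewrite /Phi F6 // cardsU1 xX /=.
have : #|X| < #|Y|.
  by apply: proper_card; apply/properP; split => //; exists x.
move: Hx cY; rewrite -!muln2; nia.
Qed.

Lemma K2s_sub (G : sgraph) (E : rel (vert G)) (EA : forall x y, E x y -> adj x y)
  s a b (F : {set vert G}) : a != b -> s <= #|F| ->
  (forall m, m \in F -> [&& E m a, E m b, m != a & m != b]) -> subgraph_of (K 2 s) G.
Proof.
move=> ab sF HF.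
have nthF : forall j : 'I_s, nth a (enum F) j \in F.
  move=> j; rewrite -mem_enum; apply: mem_nth; rewrite -cardE; exact: (leq_trans (ltn_ord _) sF).
pose f (z : vert (K 2 s)) : vert G := match z with
  | inl i => if val i == 0 then a else b
  | inr j => nth a (enum F) j end.
exists f; split.
  case=> [i1|j1] [i2|j2] /=.
  - case: i1 => [[|[|?]] ?] //; case: i2 => [[|[|?]] ?] //= H; try by move: ab; rewrite H eqxx.
    + by congr inl; apply: val_inj.
    + by congr inl; apply: val_inj.
  - have := HF _ (nthF j2); case/and4P => _ _ H1 H2 H.
    by case: (val i1 == 0) H => H; [move: H1 | move: H2]; rewrite -H eqxx.
  - have := HF _ (nthF j1); case/and4P => _ _ H1 H2 H.
    by case: (val i2 == 0) H => H; [move: H1 | move: H2]; rewrite H eqxx.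
  - have l1 : j1 < size (enum F) by rewrite -cardE; exact: (leq_trans (ltn_ord _) sF).
    have l2 : j2 < size (enum F) by rewrite -cardE; exact: (leq_trans (ltn_ord _) sF).
    move/eqP; rewrite nth_uniq ?enum_uniq //.
    by move/eqP => H; congr inr; apply: val_inj.
case=> [i|j] [i'|j'] //= _.
  have := HF _ (nthF j'); case/and4P => H1 H2 _ _.
  by rewrite adj_sym; case: (val i == 0); apply: EA.
have := HF _ (nthF j); case/and4P => H1 H2 _ _.
by case: (val i' == 0); apply: EA.
Qed.

Lemma two_sub (V : finType) (A : {set V}) : 2 <= #|A| ->
  exists a b, [/\ a != b, a \in A & b \in A].
Proof.
move=> H; have [a aA] : exists a, a \in A by apply/card_gt0P; lia.
have : 0 < #|A :\ a| by move: H; rewrite (cardsD1 a A) aA; lia.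
case/card_gt0P => b; rewrite !inE => /andP [ba bA].
by exists a, b; split => //; rewrite eq_sym.
Qed.

Lemma imset2E (aT rT : finType) (f : aT -> rT) a b : f @: [set a; b] = [set f a; f b].
Proof. by rewrite imsetU !imset_set1. Qed.

Lemma finish (C : sgraph -> Prop) (Ccl : subgraph_closed C) (G : sgraph) (CG : C G) s k
  (HK : ~ C (K 2 s))
  (Hsub : forall H : sgraph, 0 < #|vert H| -> mindeg_ge H k -> ~ C (subdivision H))
  (E : rel (vert G)) (EA : forall x y, E x y -> adj x y)
  (X M : {set vert G}) : X != set0 -> (forall m, m \in M -> m \notin X) ->
  (forall m, m \in M -> 2 <= dY E X m) -> (k.*2 * s + 1) * #|X| <= #|M| -> False.
Proof.
move=> X0 MX M2 HM.
pose nb m := [set w in X | E m w].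
pose pair m := odflt set0 [pick P : {set vert G} | (P \subset nb m) && (#|P| == 2)].
have pairP : forall m, m \in M -> exists a b, [/\ a != b, pair m = [set a; b],
    (a \in X) && E m a & (b \in X) && E m b].
  move=> m mM; rewrite /pair; case: pickP => [P /andP [PS /cards2P [a [b [ab HP]]]]|Hn].
    rewrite HP in PS *; exists a, b; split => //.
      by move/subsetP: PS => /(_ a); rewrite !inE eqxx /= => /(_ isT).
    by move/subsetP: PS => /(_ b); rewrite !inE eqxx orbT /= => /(_ isT).
  have [a [b [ab aN bN]]] := two_sub (M2 m mM).
  have := Hn [set a; b]; rewrite cards2 ab /= andbT => /negP; case.
  by apply/subsetP => w /set2P [] ->.
pose R a b := (a != b) && [exists m in M, pair m == [set a; b]].
have Rsym : symmetric R.
  by move=> a b; rewrite /R eq_sym setUC.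
have Rirr : irreflexive R by move=> a; rewrite /R eqxx.
have pairE : forall m w, m \in M -> w \in pair m -> (w \in X) && E m w.
  move=> m w mM; have [a [b [_ -> Ha Hb]]] := pairP m mM.
  by case/set2P => ->.
have C1 : #|M| <= s * #|pair @: M|.
  rewrite -sum1_card (partition_big_imset pair) /= mulnC -sum_nat_const.
  apply: leq_sum => P /imsetP [m0 m0M ->].
  rewrite sum1_card; rewrite leqNgt; apply/negP => Hlt.
  have [a [b [ab Hab Ha Hb]]] := pairP m0 m0M.
  apply: HK; apply: (Ccl _ _ CG); apply: (@K2s_sub G E EA s a b [set m in M | pair m == pair m0] ab).
    by apply: ltnW; apply: (leq_trans Hlt); apply: subset_leq_card; apply/subsetP => m; rewrite !inE.
  move=> m; rewrite inE => /andP [mM /eqP Hm].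
  have Ha' := pairE m a mM; have Hb' := pairE m b mM.
  rewrite Hm Hab in Ha' Hb'.
  case/andP: (Ha' (set21 a b)) => aX ->; case/andP: (Hb' (set22 a b)) => bX -> /=.
  by apply/andP; split; apply/negP => /eqP Heq; move: (MX m mM); rewrite Heq ?aX ?bX.
have C2 : #|pair @: M| <= \sum_(a in X) dY R X a.
  pose OP := [set p : vert G * vert G | [&& p.1 \in X, p.2 \in X & R p.1 p.2]].
  have -> : \sum_(a in X) dY R X a = #|OP|.
    rewrite /dY; under eq_bigr => a _ do rewrite -sum_b2n.
    rewrite pair_big /= (sum_b2n [pred p : vert G * vert G | (p.1 \in X) && (p.2 \in X)] (fun p => R p.1 p.2)).
    by apply: eq_card => p; rewrite !inE andbA.
  apply: (leq_trans _ (leq_imset_card (fun p => [set p.1; p.2]) OP)).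
  apply: subset_leq_card; apply/subsetP => P /imsetP [m mM ->].
  have [a [b [ab Hab Ha Hb]]] := pairP m mM.
  apply/imsetP; exists (a, b) => //=.
  rewrite inE /= (andP Ha).1 (andP Hb).1 /R ab /=.
  by apply/exists_inP; exists m => //; rewrite Hab.
have Xpos : 0 < #|X| by rewrite card_gt0.
have Hd : k.*2 * #|X| < \sum_(a in X) dY R X a.
  have : (k.*2 * s + 1) * #|X| <= s * \sum_(a in X) dY R X a.
    apply: (leq_trans HM); apply: (leq_trans C1); rewrite leq_mul2l C2 orbT //.
  nia.
have [Y YX [Y0 HY]] := densest Rsym Rirr Hd.
have [y yY] : exists y, y \in Y by apply/set0Pn.
pose T := {x : vert G | x \in Y}.
pose RT := fun u v : T => R (val u) (val v).
have RTsym : symmetric RT by move=> u v; exact: Rsym.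
have RTirr : irreflexive RT by move=> u; exact: Rirr.
pose H := SGraph RTsym RTirr.
apply: (Hsub H).
- by apply/card_gt0P; exists (exist _ y yY : T).
- move=> u; rewrite /deg /degE /=.
  apply: (leq_trans (ltnW (HY _ (valP u)))); rewrite /dY.
  rewrite -(card_imset _ val_inj); apply: subset_leq_card; apply/subsetP => z.
  rewrite inE => /andP [zY Rz]; apply/imsetP; exists (exist _ z zY) => //; by rewrite inE.
apply: (Ccl _ _ CG).
pose mid (e : edge_t H) : vert G := odflt y [pick m in M | pair m == val @: val e].
have midP : forall e, mid e \in M /\ pair (mid e) = val @: val e.
  move=> e; have := valP e; case/existsP => x /existsP [x' /andP [Hxx' /eqP He]]; rewrite /mid.
  case: pickP => [m /andP [mM /eqP Hm] | Hn] /=; first by [].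
  exfalso; move: Hxx'; rewrite /= /RT /R => /andP [_ /exists_inP [m mM Hm]].
  by move: (Hn m); rewrite mM He imset2E Hm.
exists (fun z => match z with inl u => val u | inr e => mid e end); split.
  case=> [u1|e1] [u2|e2] /= Heq.
  - by congr inl; apply: val_inj.
  - exfalso; have [mM _] := midP e2; move: (MX _ mM); rewrite -Heq (subsetP YX _ (valP u1)).
    by [].
  - exfalso; have [mM _] := midP e1; move: (MX _ mM); rewrite Heq (subsetP YX _ (valP u2)).
    by [].
  - have [_ h1] := midP e1; have [_ h2] := midP e2; rewrite Heq h2 in h1.
    by congr inr; apply: val_inj; symmetry; exact: (imset_inj val_inj h1).
case=> [u|e] [u'|e'] //= Hin.
  have [mM hm] := midP e'; have := pairE _ (val u) mM; rewrite hm (imset_f val Hin).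
  by case/(_ isT)/andP => _ Em; rewrite adj_sym; apply: EA.
have [mM hm] := midP e; have := pairE _ (val u') mM; rewrite hm (imset_f val Hin).
by case/(_ isT)/andP => _ Em; apply: EA.
Qed.

Lemma degsub (H : sgraph) (u : vert H) : deg u <= degE (@sub_adj H) (inl u).
Proof.
pose g (z : vert (subdivision H)) : vert H := match z with
  | inr e => odflt u [pick w in val e | w != u] | inl _ => u end.
apply: (leq_trans _ (leq_imset_card g _)); apply: subset_leq_card.
apply/subsetP => w; rewrite inE => Huw.
have ep : edge_pred [set u; w].
  by apply/existsP; exists u; apply/existsP; exists w; rewrite Huw eqxx.
apply/imsetP; exists (inr (exist (fun e => edge_pred e) _ ep) : vert (subdivision H)); first by rewrite inE /= set21.
rewrite /g /=; case: pickP => [w' /andP [/set2P [->|->] Hw'] | Hn] /=.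
- by move: Hw'; rewrite eqxx.
- by [].
- have wu : w != u by apply/negP => /eqP Hwu; move: Huw; rewrite Hwu adj_irr.
  by move: (Hn w); rewrite set22 wu.
Qed.

Lemma K2_not_sd d : ~ strongly_degenerate d (K 2 d.+1).
Proof.
move=> Hsd.
have [] := Hsd setT (@adj (K 2 d.+1)) _ (@adj_sym _) _.
- by move=> x y ->; rewrite !inE.
- by apply/set0Pn; exists (inl ord0); rewrite inE.
have bigl : forall i : 'I_2, d < degE (@adj (K 2 d.+1)) (inl i).
  move=> i; rewrite /degE.
  apply: (@leq_trans #|[set inr j | j : 'I_d.+1] : {set vert (K 2 d.+1)}|).
    by rewrite card_imset ?card_ord //; exact: inr_inj.
  by apply: subset_leq_card; apply/subsetP => z /imsetP [j _ ->]; rewrite inE.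
case=> [i|j]; rewrite /removable inE /=.
  by rewrite leqNgt bigl.
move=> /andP [_]; apply/negP; rewrite -ltnNge.
pose i1 : 'I_2 := Ordinal (isT : 1 < 2).
apply: (@leq_trans #|[set (inl ord0 : vert (K 2 d.+1)); inl i1]|); first by rewrite cards2.
apply: subset_leq_card; apply/subsetP => z /set2P [->|->]; rewrite inE /= bigl //.
Qed.

Lemma sub_not_sd d (H : sgraph) : 0 < #|vert H| -> mindeg_ge H d.+1 ->
  ~ strongly_degenerate d (subdivision H).
Proof.
move=> /card_gt0P [u0 _] Hmin Hsd.
have [] := Hsd setT (@adj (subdivision H)) _ (@adj_sym _) _.
- by move=> x y ->; rewrite !inE.
- by apply/set0Pn; exists (inl u0); rewrite inE.
have bigl : forall u, d < degE (@adj (subdivision H)) (inl u).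
  by move=> u; apply: (leq_trans (Hmin u)); apply: degsub.
case=> [u|e]; rewrite /removable inE /=.
  by rewrite leqNgt bigl.
move=> /andP [_]; apply/negP; rewrite -ltnNge.
have := valP e; case/existsP => x /existsP [x' /andP [Hxx' /eqP He]].
have xx' : x != x' by apply/negP => /eqP Hx; move: Hxx'; rewrite Hx adj_irr.
apply: (@leq_trans #|[set (inl x : vert (subdivision H)); inl x']|).
  by rewrite cards2 (inj_eq (@inl_inj _ _)) xx'.
apply: subset_leq_card; apply/subsetP => z /set2P [->|->]; rewrite inE /= bigl He ?set21 ?set22 //.
Qed.

End Aux.
Import Aux.

Theorem theorem1p2 (C : sgraph -> Prop) :
  subgraph_closed C ->
  ((exists d : nat, forall G : sgraph, C G -> strongly_degenerate d G) <->
   (exists s k : nat,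
      ~ C (K 2 s) /\
      forall H : sgraph, 0 < #|vert H| -> mindeg_ge H k -> ~ C (subdivision H))).
Proof.
move=> Ccl; split.
  case=> d Hd; exists d.+1, d.+1; split.
    by move=> CK; apply: (@K2_not_sd d); apply: Hd.
  by move=> H Hpos Hmin CH; apply: (sub_not_sd Hpos Hmin); apply: Hd.
case=> s [k [HK Hsub]].
pose N := k.*2 * s + 1.
pose dl := 8 * N + 10.
exists (dl.*2 * (N + 1)) => G CG S E HE Esym S0.
set d := dl.*2 * (N + 1).
case: (boolP [exists v, removable S E d v]) => [/existsP [v Hv]|Hno]; first by exists v.
exfalso.
have EA : forall x y, E x y -> adj x y by move=> x y /HE /and3P [].
have ES : forall x y, E x y -> y \in S by move=> x y /HE /and3P [].
have Eirr : irreflexive E by move=> x; apply/negP => /EA; rewrite adj_irr.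
have degS : forall v, degE E v = dY E S v.
  move=> v; apply: eq_card => w; rewrite !inE.
  by case Evw: (E v w); rewrite ?andbT ?andbF // (ES _ _ Evw).
pose B := [set v in S | d < degE E v].
pose L := S :\: B.
have BS : B \subset S by apply/subsetP => v; rewrite inE => /andP [].
have Hsmall : forall v, v \in L -> 2 <= dY E B v.
  move=> v; rewrite !inE => /andP [vB vS]; rewrite vS /= -leqNgt in vB.
  have Hnr := negP (existsPn Hno v).
  have H1 : 1 < #|[set w | E v w && (d < degE E w)]|.
    by rewrite ltnNge; apply/negP => H; apply: Hnr; rewrite /removable vS vB H.
  apply: (leq_trans H1); apply: subset_leq_card; apply/subsetP => w; rewrite !inE.
  by case/andP => Evw ->; rewrite Evw (ES _ _ Evw).
have B0 : B != set0.
  case/set0Pn: S0 => v vS; apply/set0Pn; case: (boolP (v \in B)) => vB; first by exists v.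
  have vL : v \in L by rewrite inE vB vS.
  have := Hsmall v vL; rewrite /dY => H2.
  have : 0 < #|[set w in B | E v w]| by lia.
  by case/card_gt0P => w; rewrite inE => /andP [wB _]; exists w.
have cardS : #|S| = #|B| + #|L| by rewrite -(cardsID B S) (setIidPr BS).
case: (leqP (N * #|B|) #|L|) => HL.
  apply: (finish Ccl CG HK Hsub EA (X:=B) (M:=L)) => //.
  by move=> m; rewrite inE => /andP [].
have Hsum : dl.*2 * #|S| < \sum_(v in S) dY E S v.
  have : d.+1 * #|B| <= \sum_(v in S) dY E S v.
    rewrite (big_setID B) (setIidPr BS) /=; apply: leq_trans (leq_addr _ _).
    rewrite mulnC -sum_nat_const; apply: leq_sum => v vB; rewrite -degS.
    by move: vB; rewrite inE => /andP [].
  have Bpos : 0 < #|B| by rewrite card_gt0.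
  rewrite cardS /d; move: HL Bpos; rewrite -!muln2; nia.
have [Y YS [Y0 HY]] := densest Esym Eirr Hsum.
have [X [M [XY X0 MX M2 HM]]] := greedy Esym Y0 (leqnn (8 * N + 10)) (fun y yY => ltnW (HY y yY)).
exact: (finish Ccl CG HK Hsub EA X0 MX M2).
Qed.
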